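(* Let $(B,\lfloor\cdot,\cdot\rfloor,\|\cdot\|)$ be an SSDB space with quadratic form $q$, and let $f:B\to\mathbb{R}\cup\{+\infty\}$ be a minimal element (with respect to the pointwise order) of the set of convex functions $g:B\to\mathbb{R}\cup\{+\infty\}$ satisfying $g\ge q$ on $B$. Then there is a maximally $q$-positive set $M\subset B$ such that $f=\Phi_M$.
   Context: An SSD space is a pair $(B,\lfloor\cdot,\cdot\rfloor)$ with $B$ a nonzero real vector space and $\lfloor\cdot,\cdot\rfloor$ a symmetric bilinear form; $q(b)=\frac12\lfloor b,b\rfloor$. An SSDB space is a triple $(B,\lfloor\cdot,\cdot\rfloor,\|\cdot\|)$ such that $(B,\lfloor\cdot,\cdot\rfloor)$ is an SSD space, $(B,\|\cdot\|)$ is a Banach space, and $i:B\to B^*$, $i(b)=\lfloor\cdot,b\rfloor$, is a surjective isometry onto $B^*$. A nonempty $A\subset B$ is $q$-positive if $q(b-c)\ge0$ for all $b,c\in A$; maximally $q$-positive if $q$-positive and not properly contained in another $q$-positive set. For nonempty $A$, $\Phi_A(x)=\sup_{a\in A}\{\lfloor x,a\rfloor-q(a)\}$. *)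

(* Defs.v *)
From HB Require Import structures.
From mathcomp Require Import all_boot all_order all_algebra.
From mathcomp Require Import all_classical all_reals all_analysis.
Set Implicit Arguments. Unset Strict Implicit. Unset Printing Implicit Defensive.
Import Order.TTheory GRing.Theory Num.Theory.
Import numFieldNormedType.Exports.
Local Open Scope classical_set_scope.
Local Open Scope ring_scope.

Section SSD.
Variables (R : realType) (B : completeNormedModType R).

Definition sym_bilinear (bf : B -> B -> R) : Prop :=
  (forall x y z : B, bf (x + y) z = bf x z + bf y z) /\
  (forall (a : R) (x y : B), bf (a *: x) y = a * bf x y) /\
  (forall x y : B, bf x y = bf y x).

Definition cont_linear_functional (phi : B -> R) : Prop :=
  (forall x y : B, phi (x + y) = phi x + phi y) /\
  (forall (a : R) (x : B), phi (a *: x) = a * phi x) /\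
  continuous phi.

(* The operator norm of the functional (fun x => bf x b) equals ||b||. *)
Definition dual_norm_eq (bf : B -> B -> R) (b : B) : Prop :=
  (forall x : B, `|bf x b| <= `|x| * `|b|) /\
  (forall e : R, 0 < e -> exists x : B, `|x| <= 1 /\ `|b| - e < `|bf x b|).

(* SSDB space: B nonzero real Banach space, bf symmetric bilinear,
   i : b |-> bf . b is a surjective isometry of B onto B^*. *)
Definition is_SSDB (bf : B -> B -> R) : Prop :=
  (exists b : B, b != 0) /\
  sym_bilinear bf /\
  (forall b : B, cont_linear_functional (fun x => bf x b)) /\
  (forall b : B, dual_norm_eq bf b) /\
  (forall phi : B -> R, cont_linear_functional phi ->
     exists b : B, forall x : B, phi x = bf x b).

Definition qform (bf : B -> B -> R) (b : B) : R := (bf b b) / 2.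

Definition q_positive (bf : B -> B -> R) (A : set B) : Prop :=
  A !=set0 /\ (forall b c, A b -> A c -> 0 <= qform bf (b - c)).

Definition max_q_positive (bf : B -> B -> R) (A : set B) : Prop :=
  q_positive bf A /\
  (forall A' : set B, q_positive bf A' -> A `<=` A' -> A' = A).

Definition Phi (bf : B -> B -> R) (A : set B) (x : B) : \bar R :=
  ereal_sup [set ((bf x a - qform bf a)%:E) | a in A].

Definition proper_convex (g : B -> \bar R) : Prop :=
  (forall x, g x != -oo%E) /\
  (forall (x y : B) (t : R), 0 <= t <= 1 ->
     (g (t *: x + (1 - t) *: y)%R <= t%:E * g x + (1 - t)%:E * g y)%E).

Definition convex_majorant_q (bf : B -> B -> R) (g : B -> \bar R) : Prop :=
  proper_convex g /\ (forall x, ((qform bf x)%:E <= g x)%E).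

Definition minimal_convex_majorant_q (bf : B -> B -> R) (f : B -> \bar R) : Prop :=
  convex_majorant_q bf f /\
  (forall g, convex_majorant_q bf g -> (forall x, (g x <= f x)%E) -> g = f).

End SSD.

(* Main.v *)
Require Import Defs.
From HB Require Import structures.
From mathcomp Require Import all_boot all_order all_algebra.
From mathcomp Require Import all_classical all_reals all_analysis.
From mathcomp Require Import ring lra.
Set Implicit Arguments. Unset Strict Implicit. Unset Printing Implicit Defensive.
Import Order.TTheory GRing.Theory Num.Theory.
Import numFieldNormedType.Exports.
Local Open Scope classical_set_scope.
Local Open Scope ring_scope.

Section InfLemmas.
Variable R : realType.
Implicit Types (S : set R).

Lemma inf_le_elt S m a : (forall y, S y -> m <= y) -> S a -> inf S <= a.
Proof. by move=> hm Sa; apply: ge_inf => //; exists m. Qed.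

Lemma le_inf_all S x : S !=set0 -> (forall y, S y -> x <= y) -> x <= inf S.
Proof. by move=> S0 hx; apply: lb_le_inf. Qed.

Lemma le_inf_aff S (m c a b : R) : 0 <= a -> S !=set0 -> (forall y, S y -> m <= y) ->
  (forall y, S y -> c <= a * y + b) -> c <= a * inf S + b.
Proof.
move=> a0 S0 hm hc; have [az|ap] := eqVneq a 0.
  subst a; case: S0 => y Sy; move: (hc y Sy); by rewrite !mul0r !add0r.
have apos : 0 < a by rewrite lt_def ap a0.
have : (c - b) / a <= inf S.
  apply: le_inf_all => // y Sy; rewrite ler_pdivrMr //; move: (hc y Sy); lra.
by rewrite ler_pdivrMr // => h; lra.
Qed.
End InfLemmas.

Section HahnBanach.
Variables (R : realType) (V : lmodType R).

Definition subl (h : V -> R) :=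
  (forall x y, h (x + y) <= h x + h y) /\
  (forall (a : R) x, 0 < a -> h (a *: x) <= a * h x).

Lemma subl0 h : subl h -> h 0 = 0.
Proof.
move=> [hD hZ]; have h1 := hZ 2 0 ltac:(lra).
have h2 := hZ (2^-1) 0 ltac:(rewrite invr_gt0; lra).
rewrite scaler0 in h1; rewrite scaler0 in h2; apply/eqP; rewrite eq_le; apply/andP; split.
  by move: h2; set u := h 0; lra.
by move: h1; set u := h 0; lra.
Qed.

Lemma sublN h x : subl h -> - h (- x) <= h x.
Proof.
move=> hs; have := hs.1 x (- x); rewrite subrr (subl0 hs) => H; lra.
Qed.

Lemma sublZ h (a : R) x : subl h -> 0 < a -> h (a *: x) = a * h x.
Proof.
move=> hs ap; apply/eqP; rewrite eq_le hs.2 //=.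
have ai : 0 < a^-1 by rewrite invr_gt0.
have := hs.2 (a^-1) (a *: x) ai.
rewrite scalerA mulVf ?gt_eqF // scale1r => H.
by rewrite -(ler_pM2l ai) mulrA mulVf ?gt_eqF // mul1r.
Qed.

Lemma sublZ0 h (a : R) x : subl h -> 0 <= a -> h (a *: x) = a * h x.
Proof.
move=> hs; rewrite le_eqVlt => /orP[/eqP <-|ap]; last exact: sublZ.
by rewrite scale0r mul0r subl0.
Qed.

Variable p : V -> R.
Hypothesis psub : subl p.

Definition TT := {h : V -> R | subl h /\ forall x, h x <= p x}.

Definition Rle (s t : TT) : bool := `[< forall x, sval t x <= sval s x >].

Lemma TT_lb (h : V -> R) x : subl h -> (forall x, h x <= p x) -> - p (- x) <= h x.
Proof. move=> hs hp; have := sublN x hs; have := hp (- x); lra. Qed.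

Lemma chain_bound (A : set TT) : total_on A Rle -> exists t, forall s, A s -> Rle s t.
Proof.
move=> Atot.
pose E : set (V -> R) := fun h => h = p \/ exists2 s, A s & sval s = h.
have Es : forall h, E h -> subl h /\ forall x, h x <= p x.
  move=> h [->|[s _ <-]]; last exact: (svalP s).
  by split => // x.
have Etot : forall h1 h2, E h1 -> E h2 ->
    (forall x, h1 x <= h2 x) \/ (forall x, h2 x <= h1 x).
  move=> h1 h2 [->|[s1 As1 <-]] [->|[s2 As2 <-]].
  - by left.
  - by right => x; exact: (svalP s2).2.
  - by left => x; exact: (svalP s1).2.
  - have [/asboolP H|/asboolP H] := Atot _ _ As1 As2; [right|left]; exact: H.
pose m x := inf [set h x | h in E].
have Ep : E p by left.
have mne x : [set h x | h in E] !=set0 by exists (p x); exists p.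
have mlb x : forall y, [set h x | h in E] y -> - p (- x) <= y.
  by move=> _ [h Eh <-]; have [??] := Es h Eh; exact: TT_lb.
have mle x h : E h -> m x <= h x.
  by move=> Eh; apply: inf_le_elt (mlb x) _; exists h.
have msub : subl m.
  split.
  - move=> x y.
    have H1 : forall h1 h2, E h1 -> E h2 -> m (x + y) <= h1 x + h2 y.
      move=> h1 h2 E1 E2.
      have key : forall h, E h -> (forall z, h z <= h1 z) -> (forall z, h z <= h2 z) ->
          m (x + y) <= h1 x + h2 y.
        move=> h Eh le1 le2; apply: (le_trans (mle _ _ Eh)).
        apply: (le_trans ((Es h Eh).1.1 x y)); exact: lerD.
      have [H|H] := Etot h1 h2 E1 E2.
      + by apply: (key h1) => // z; exact: H.
      + by apply: (key h2) => // z; exact: H.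
    have H2 : forall h2, E h2 -> m (x + y) <= 1 * m x + h2 y.
      move=> h2 E2; apply: le_inf_aff => //; first exact: mlb.
      by move=> _ [h1 E1 <-]; rewrite mul1r; exact: H1.
    have : m (x + y) <= 1 * m y + m x.
      apply: le_inf_aff => //; first exact: mlb.
      by move=> _ [h2 E2 <-]; have := H2 h2 E2; lra.
    lra.
  - move=> a x ap.
    have : m (a *: x) <= a * m x + 0.
      apply: le_inf_aff => //; first exact: ltW.
        exact: mlb.
      move=> _ [h Eh <-]; rewrite addr0; apply: (le_trans (mle _ _ Eh)).
      exact: (Es h Eh).1.2.
    by rewrite addr0.
have mp : forall x, m x <= p x by move=> x; exact: mle.
exists (exist _ m (conj msub mp)) => s As; apply/asboolP => x /=.
by apply: mle; right; exists s.
Qed.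

Lemma minimal_linear (h0 : V -> R) : subl h0 -> (forall x, h0 x <= p x) ->
  (forall h, subl h -> (forall x, h x <= h0 x) -> h = h0) ->
  forall x, h0 (- x) = - h0 x.
Proof.
move=> hs hp hmin x.
pose S y := [set h0 (y + t *: x) - t * h0 x | t in [set t : R | 0 <= t]].
pose h' y := inf (S y).
have Sne y : S y !=set0.
  by exists (h0 (y + 0 *: x) - 0 * h0 x); rewrite /S /=; exists 0.

have Slb y : forall z, S y z -> - h0 (- y) <= z.
  move=> _ [t t0 <-].
  have := hs.1 (y + t *: x) (- y).
  rewrite addrC addKr (sublZ0 _ hs t0); lra.
have h'le y t : 0 <= t -> h' y <= h0 (y + t *: x) - t * h0 x.
  by move=> t0; apply: inf_le_elt (Slb y) _; exists t.
have h's : subl h'.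
  split.
  - move=> y1 y2.
    have H1 : forall t1 t2, 0 <= t1 -> 0 <= t2 ->
        h' (y1 + y2) <= (h0 (y1 + t1 *: x) - t1 * h0 x) + (h0 (y2 + t2 *: x) - t2 * h0 x).
      move=> t1 t2 t10 t20; apply: (le_trans (h'le _ (t1 + t2) (addr_ge0 t10 t20))).
      have -> : y1 + y2 + (t1 + t2) *: x = (y1 + t1 *: x) + (y2 + t2 *: x).
        by rewrite scalerDl addrACA.
      have := hs.1 (y1 + t1 *: x) (y2 + t2 *: x); lra.
    have H2 : forall t2, 0 <= t2 ->
        h' (y1 + y2) <= 1 * h' y1 + (h0 (y2 + t2 *: x) - t2 * h0 x).
      move=> t2 t20; apply: le_inf_aff => //; first exact: Slb.
      by move=> _ [t1 t10 <-]; rewrite mul1r; exact: H1.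
    have : h' (y1 + y2) <= 1 * h' y2 + h' y1.
      apply: le_inf_aff => //; first exact: Slb.
      by move=> _ [t2 t20 <-]; have := H2 t2 t20; lra.
    lra.
  - move=> a y ap.
    have : h' (a *: y) <= a * h' y + 0.
      apply: le_inf_aff => //; first exact: ltW.
        exact: Slb.
      move=> _ [t t0 <-]; rewrite addr0.
      apply: (le_trans (h'le _ (a * t) (mulr_ge0 (ltW ap) t0))).
      rewrite -scalerA -scalerDr (sublZ _ hs ap); lra.
    by rewrite addr0.
have h'le0 : forall y, h' y <= h0 y.
  by move=> y; have := h'le y 0 (lexx _); rewrite scale0r addr0 mul0r subr0.
have eq := hmin h' h's h'le0.
have := h'le (- x) 1 ler01; rewrite scale1r addNr (subl0 hs) mul1r sub0r -eq.
have := sublN x hs; rewrite -eq; lra.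
Qed.

Definition is_linfun (L : V -> R) :=
  (forall x y, L (x + y) = L x + L y) /\ (forall (a : R) (x : V), L (a *: x) = a * L x).

Theorem hahn_banach : exists L : V -> R, is_linfun L /\ forall x, L x <= p x.
Proof.
have [||||t tmin] := @Zorn TT Rle.
- by move=> t; apply/asboolP.
- move=> r s t /asboolP H1 /asboolP H2; apply/asboolP => x.
  exact: le_trans (H2 x) (H1 x).
- move=> s t /asboolP H1 /asboolP H2; case: s t H1 H2 => [s sP] [t tP] /= H1 H2.
  have st : s = t by apply/funext => x; apply/eqP; rewrite eq_le H1 H2.
  exact: eq_exist.
- exact: chain_bound.
case: t tmin => [h0 [hs hp]] tmin.
have hmin : forall h, subl h -> (forall x, h x <= h0 x) -> h = h0.
  move=> h hsh hle.
  have hp' : forall x, h x <= p x by move=> x; exact: le_trans (hle x) (hp x).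
  have := tmin (exist _ h (conj hsh hp')).
  by move=> /(_ (asboolT hle)) [].
have hN := minimal_linear hs hp hmin.
have hadd : forall x y, h0 (x + y) = h0 x + h0 y.
  move=> x y; apply/eqP; rewrite eq_le hs.1 /=.
  have := hs.1 (- x) (- y); rewrite -opprD !hN; lra.
exists h0; split => //; split => // a x.
have [a0|a0] := leP 0 a; first exact: sublZ0.
have na : 0 <= - a by rewrite oppr_ge0 ltW.
have := sublZ0 x hs na.
by rewrite scaleNr hN mulNr => /eqP; rewrite eqr_opp => /eqP.
Qed.
End HahnBanach.

Section DirDeriv.
Variables (R : realType) (V : lmodType R) (psi : V -> R).
Hypothesis psic : forall x y (l : R), 0 <= l <= 1 ->
  psi (l *: x + (1 - l) *: y) <= l * psi x + (1 - l) * psi y.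

Definition dd x := inf [set (psi (t *: x) - psi 0) / t | t in [set t : R | 0 < t]].

Lemma dd_lb x (t : R) : 0 < t -> psi 0 - psi (- x) <= (psi (t *: x) - psi 0) / t.
Proof.
move=> t0; set l : R := (1 + t)^-1.
have t1 : 0 < 1 + t by lra.
have hl : l * (1 + t) = 1 by rewrite mulVf // gt_eqF.
have l01 : 0 <= l <= 1.
  have l0 : 0 <= l by rewrite invr_ge0 ltW.
  apply/andP; split => //. clearbody l. nra.
have := psic (t *: x) (- x) l01.
have -> : l *: (t *: x) + (1 - l) *: (- x) = (l * t - (1 - l)) *: x.
  by rewrite scalerA scalerN -scalerBl.
have -> : l * t - (1 - l) = 0.
  by rewrite /l; field; rewrite gt_eqF.
rewrite scale0r => H.
rewrite ler_pdivlMr //.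
have H2 : (1 + t) * psi 0 <= (1 + t) * (l * psi (t *: x) + (1 - l) * psi (- x)).
  by rewrite ler_pM2l.
have E : (1 + t) * (l * psi (t *: x) + (1 - l) * psi (- x)) = psi (t *: x) + t * psi (- x).
  by rewrite /l; field; rewrite gt_eqF.
rewrite E in H2.
lra.
Qed.

Lemma dd_set_ne x : [set (psi (t *: x) - psi 0) / t | t in [set t : R | 0 < t]] !=set0.
Proof. by exists ((psi (1 *: x) - psi 0) / 1), 1 => //=. Qed.

Lemma dd_set_lb x : forall y, [set (psi (t *: x) - psi 0) / t | t in [set t : R | 0 < t]] y ->
  psi 0 - psi (- x) <= y.
Proof. by move=> _ [t t0 <-]; exact: dd_lb. Qed.

Lemma dd_le x (t : R) : 0 < t -> dd x <= (psi (t *: x) - psi 0) / t.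
Proof. by move=> t0; apply: inf_le_elt (@dd_set_lb x) _; exists t. Qed.

Lemma dd_subl : subl dd.
Proof.
split.
- move=> x y.
  have H1 : forall t s : R, 0 < t -> 0 < s ->
      dd (x + y) <= 1 * ((psi (t *: x) - psi 0) / t) + ((psi (s *: y) - psi 0) / s).
    move=> t s t0 s0; rewrite mul1r.
    set u : R := t * s / (t + s); set l : R := s / (t + s).
    have ts : 0 < t + s by lra.
    have u0 : 0 < u by rewrite /u divr_gt0 // mulr_gt0.
    apply: (le_trans (dd_le _ u0)).
    have l01 : 0 <= l <= 1.
      apply/andP; split; first by rewrite /l divr_ge0 // ltW.
      by rewrite /l ler_pdivrMr //; lra.
    have := psic (t *: x) (s *: y) l01.
    have -> : l *: (t *: x) + (1 - l) *: (s *: y) = u *: (x + y).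
      rewrite !scalerA scalerDr; congr (_ *: _ + _ *: _).
        by rewrite /l /u; field; rewrite gt_eqF.
      by rewrite /l /u; field; rewrite gt_eqF.
    move=> H; rewrite ler_pdivrMr //.
    have -> : ((psi (t *: x) - psi 0) / t + (psi (s *: y) - psi 0) / s) * u =
        l * (psi (t *: x) - psi 0) + (1 - l) * (psi (s *: y) - psi 0).
      by rewrite /l /u; field; rewrite !gt_eqF.
    lra.
  have H2 : forall s : R, 0 < s -> dd (x + y) <= 1 * dd x + ((psi (s *: y) - psi 0) / s).
    move=> s s0; apply: le_inf_aff => //; first exact: dd_set_ne.
      exact: dd_set_lb.
    by move=> _ [t t0 <-]; exact: H1.
  have : dd (x + y) <= 1 * dd y + dd x.
    apply: le_inf_aff => //; first exact: dd_set_ne.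
      exact: dd_set_lb.
    by move=> _ [s s0 <-]; have := H2 s s0; lra.
  lra.
- move=> a x ap.
  have : dd (a *: x) <= a * dd x + 0.
    apply: le_inf_aff; first exact: ltW.
    + exact: dd_set_ne.
    + exact: dd_set_lb.
    move=> _ [s s0 <-]; rewrite addr0.
    have sa : 0 < s / a by rewrite divr_gt0.
    apply: (le_trans (dd_le _ sa)).
    rewrite scalerA mulfVK ?gt_eqF //.
    suff -> : (psi (s *: x) - psi 0) / (s / a) = a * ((psi (s *: x) - psi 0) / s) by [].
    by field; rewrite !gt_eqF.
  by rewrite addr0.
Qed.

Lemma linear_minorant : exists L : V -> R, is_linfun L /\ forall x, L x <= psi x - psi 0.
Proof.
have [L [Ll LP]] := hahn_banach dd_subl.
exists L; split => // x; apply: (le_trans (LP x)).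
by have := dd_le x ltr01; rewrite scale1r divr1.
Qed.
End DirDeriv.

Section Conv.
Variables (R : realType) (B : completeNormedModType R) (bf : B -> B -> R).
Variables (D : set B) (K : B -> R).
Hypothesis Kconv : forall x y (l : R), D x -> D y -> 0 <= l <= 1 ->
  D (l *: x + (1 - l) *: y) /\ K (l *: x + (1 - l) *: y) <= l * K x + (1 - l) * K y.
Hypothesis Klb : forall z, D z -> 0 <= K z + `|z| ^+ 2 / 2.
Variable z0 : B.
Hypothesis Dz0 : D z0.

Definition Sc (x : B) := [set K z + `|z - x| ^+ 2 / 2 | z in D].
Definition psi x := inf (Sc x).

Lemma Sc_ne x : Sc x !=set0.
Proof. by exists (K z0 + `|z0 - x| ^+ 2 / 2), z0. Qed.

Lemma Sc_lb x : forall y, Sc x y -> - (K z0 + `|z0 + x| ^+ 2 / 2) <= y.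
Proof.
move=> _ [z Dz <-].
have h2 : 0 <= (2^-1 : R) <= 1 by apply/andP; split; rewrite ?invr_ge0 ?invf_le1; lra.
have [Dm Km] := Kconv Dz Dz0 h2.
have E : 2^-1 *: z + (1 - 2^-1) *: z0 = 2^-1 *: ((z - x) + (z0 + x)).
  have -> : 1 - 2^-1 = 2^-1 :> R by field.
  by rewrite -scalerDr addrACA addNr addr0.
have h12 : 1 - 2^-1 = 2^-1 :> R by field.
have := Klb Dm; rewrite E in Km *; rewrite h12 in Km.
rewrite normrZ ger0_norm ?invr_ge0 //.
have tri := ler_normD (z - x) (z0 + x).
move: Km tri.
set k := K _; set a := `|z - x|; set b := `|z0 + x|; set c := `|_ + _|.
have a0 : 0 <= a by apply: normr_ge0.
have b0 : 0 <= b by apply: normr_ge0.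
have c0 : 0 <= c by apply: normr_ge0.
move=> Km tri.
have h3 : c ^+ 2 <= (a + b) ^+ 2 by rewrite lerXn2r // ?nnegrE; lra.
have h4 : (2^-1 * c) ^+ 2 / 2 = c ^+ 2 / 8 by field.
rewrite h4 => H.
have Ke : 2^-1 * K z + 2^-1 * K z0 = (K z + K z0) / 2 by field.
rewrite Ke in Km.
move: h3; rewrite !expr2 => h3.
move: H; rewrite !expr2 => H.
clearbody k a b c. have hab : 0 <= (a - b) ^+ 2 := sqr_ge0 _. rewrite expr2 in hab.
nra.
Qed.

Lemma psi_le x z : D z -> psi x <= K z + `|z - x| ^+ 2 / 2.
Proof. by move=> Dz; apply: inf_le_elt (@Sc_lb x) _; exists z. Qed.

Lemma psi0_ge0 : 0 <= psi 0.
Proof.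
apply: le_inf_all; first exact: Sc_ne.
by move=> _ [z Dz <-]; rewrite subr0; exact: Klb.
Qed.

Lemma psi_conv x y (l : R) : 0 <= l <= 1 ->
  psi (l *: x + (1 - l) *: y) <= l * psi x + (1 - l) * psi y.
Proof.
move=> /andP[l0 l1].
have H1 : forall z1 z2, D z1 -> D z2 ->
    psi (l *: x + (1 - l) *: y) <= l * (K z1 + `|z1 - x| ^+ 2 / 2) + (1 - l) * (K z2 + `|z2 - y| ^+ 2 / 2).
  move=> z1 z2 D1 D2.
  have [Dz Kz] := Kconv D1 D2 (introT andP (conj l0 l1)).
  apply: (le_trans (psi_le _ Dz)).
  have -> : l *: z1 + (1 - l) *: z2 - (l *: x + (1 - l) *: y) =
      l *: (z1 - x) + (1 - l) *: (z2 - y).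
    by rewrite !scalerBr opprD addrACA.
  have tri := ler_normD (l *: (z1 - x)) ((1 - l) *: (z2 - y)).
  rewrite !normrZ !ger0_norm in tri; [|lra|lra].
  move: tri Kz.
  set a := `|z1 - x|; set b := `|z2 - y|; set c := `|_ + _|.
  have a0 : 0 <= a by apply: normr_ge0.
  have b0 : 0 <= b by apply: normr_ge0.
  have c0 : 0 <= c by apply: normr_ge0.
  move=> tri Kz.
  clearbody a b c.
  have la : 0 <= l * a by rewrite mulr_ge0.
  have lb : 0 <= (1 - l) * b by rewrite mulr_ge0 // subr_ge0.
  have h3 : c ^+ 2 <= (l * a + (1 - l) * b) ^+ 2.
    by rewrite lerXn2r // ?nnegrE //; apply: addr_ge0.
  move: h3; rewrite !expr2 => h3.
  have hsq : 0 <= (a - b) * (a - b) by rewrite -expr2 sqr_ge0.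
  have hl : 0 <= l * (1 - l) by rewrite mulr_ge0 // subr_ge0.
  have hint := mulr_ge0 hl hsq.
  have h5 : (l * a + (1 - l) * b) * (l * a + (1 - l) * b) <= l * (a * a) + (1 - l) * (b * b).
    lra.
  lra.
have H2 : forall z2, D z2 ->
    psi (l *: x + (1 - l) *: y) <= l * psi x + (1 - l) * (K z2 + `|z2 - y| ^+ 2 / 2).
  move=> z2 D2; apply: le_inf_aff => //; first exact: Sc_ne.
    exact: Sc_lb.
  by move=> _ [z1 D1 <-]; exact: H1.
have : psi (l *: x + (1 - l) *: y) <= (1 - l) * psi y + l * psi x.
  apply: le_inf_aff; first lra.
  - exact: Sc_ne.
  - exact: Sc_lb.
  by move=> _ [z2 D2 <-]; have := H2 z2 D2; lra.
lra.
Qed.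
End Conv.

Lemma le_eps (R : realType) (A Bv c : R) : 0 <= c ->
  (forall e, 0 < e -> A - e * c <= Bv) -> A <= Bv.
Proof.
move=> c0 h; rewrite leNgt; apply/negP => H.
have c1 : 0 < c + 1 by lra.
set e := (A - Bv) / (c + 1).
have e0 : 0 < e by rewrite /e divr_gt0 // subr_gt0.
have ee : e * (c + 1) = A - Bv by rewrite /e divfK // gt_eqF.
have := h e e0; nra.
Qed.

Section ConvBound.
Variables (R : realType) (B : completeNormedModType R) (bf : B -> B -> R).
Variables (D : set B) (K : B -> R).
Hypothesis Kconv : forall x y (l : R), D x -> D y -> 0 <= l <= 1 ->
  D (l *: x + (1 - l) *: y) /\ K (l *: x + (1 - l) *: y) <= l * K x + (1 - l) * K y.
Hypothesis Klb : forall z, D z -> 0 <= K z + `|z| ^+ 2 / 2.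
Hypothesis surj : forall phi : B -> R, cont_linear_functional phi ->
     exists b : B, forall x : B, phi x = bf x b.
Hypothesis dualn : forall b : B, dual_norm_eq bf b.
Hypothesis hlin : forall b : B, cont_linear_functional (fun x => bf x b).

Lemma conv_bound : exists d, forall z, D z -> bf z d + `|d| ^+ 2 / 2 <= K z.
Proof.
case: (pselect (exists z0, D z0)) => [[z0 Dz0]|nD]; last first.
  by exists 0 => z Dz; exfalso; apply: nD; exists z.
have [L [[Ladd LZ] LP]] := linear_minorant (psi_conv Kconv Klb Dz0).
have Lle : forall x z, D z -> L x <= K z + `|z - x| ^+ 2 / 2.
  move=> x z Dz; apply: (le_trans (LP x)).
  have := psi0_ge0 Klb Dz0; have := psi_le Kconv Klb Dz0 x Dz; lra.
have L0 : L 0 = 0 by have := LZ 0 0; rewrite scale0r mul0r.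
have LN : forall v, L (- v) = - L v.
  by move=> v; rewrite -scaleN1r LZ mulN1r.
set C := K z0 + (`|z0| + 1) ^+ 2 / 2 + 1.
have Cpos : 0 < C.
  have := Klb Dz0; have := normr_ge0 z0; rewrite /C; set a := `|z0|; rewrite !expr2; nra.
have Lb1 : forall v, `|v| <= 1 -> L v <= C.
  move=> v v1; apply: (le_trans (Lle v z0 Dz0)); rewrite /C.
  have tri : `|z0 - v| <= `|z0| + 1.
    by apply: (le_trans (ler_normB _ _)); lra.
  have := normr_ge0 (z0 - v); have := normr_ge0 z0.
  move: tri; set a := `|z0 - v|; set b := `|z0|; rewrite !expr2; nra.
have Labs : forall v, `|L v| <= C * `|v|.
  move=> v; have [->|v0] := eqVneq v 0; first by rewrite L0 !normr0 mulr0.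
  have nv : 0 < `|v| by rewrite normr_gt0.
  set w := `|v|^-1 *: v.
  have nw : `|w| = 1 by rewrite /w normrZ ger0_norm ?invr_ge0 ?normr_ge0 // mulVf // gt_eqF.
  have vw : v = `|v| *: w by rewrite /w scalerA mulfV ?gt_eqF // scale1r.
  have h1 : L w <= C by apply: Lb1; rewrite nw.
  have h2 : L (- w) <= C by apply: Lb1; rewrite normrN nw.
  rewrite LN in h2.
  rewrite {1}vw LZ normrM ger0_norm ?normr_ge0 // mulrC ler_pM2r //.
  rewrite ler_norml; lra.
have Lcont : continuous L.
  move=> x; apply/cvgrPdist_lt => e e0.
  have eC : 0 < e / C by rewrite divr_gt0.
  near=> y.
  have -> : L x - L y = L (x - y) by rewrite Ladd LN.
  apply: (le_lt_trans (Labs _)).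
  have H : `|x - y| < e / C by near: y; apply: cvgr_dist_lt.
  by rewrite -ltr_pdivlMl // mulrC.
have [d hd] := surj (conj Ladd (conj LZ Lcont)).
have key : forall z w, D z -> bf z d + bf w d - `|w| ^+ 2 / 2 <= K z.
  move=> z w Dz; have := Lle (z + w) z Dz.
  rewrite hd -hd Ladd !hd.
  have -> : z - (z + w) = - w by rewrite opprD addrA subrr add0r.
  rewrite normrN; lra.
exists d => z Dz.
have [hD [hZ _]] := hlin d.
have nd := normr_ge0 d.
apply: (le_eps nd) => e e0.
have [_ hsup] := dualn d.
have [x [x1 hx]] := hsup e e0.
have nx := normr_ge0 x.
pose s : R := if 0 <= bf x d then `|d| else - `|d|.
have hs : bf (s *: x) d = `|d| * `|bf x d|.
  rewrite hZ /s; case: ifP => h; first by rewrite ger0_norm.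
  rewrite ltr0_norm; first by rewrite mulNr mulrN.
  by rewrite ltNge h.
have ns : `|s *: x| <= `|d|.
  rewrite normrZ /s; case: ifP => _; rewrite ?normrN ger0_norm //; nra.
have := key z (s *: x) Dz; rewrite hs.
have hsx := normr_ge0 (s *: x).
have hbx := normr_ge0 (bf x d).
move: ns hx; set a := `|s *: x|; set n := `|d|; set m := `|bf x d|.
move=> ns hx H.
have h1 : a ^+ 2 <= n ^+ 2 by rewrite lerXn2r // ?nnegrE.
have h2 : n * (n - e) <= n * m by rewrite ler_wpM2l //; lra.
move: h1; rewrite !expr2 => h1; move: H; rewrite !expr2 => H.
nra.
Unshelve. all: by end_near.
Qed.
End ConvBound.

Section Bil.
Variables (R : realType) (B : completeNormedModType R) (bf : B -> B -> R).
Hypothesis hsb : sym_bilinear bf.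

Lemma bfDl x y z : bf (x + y) z = bf x z + bf y z. Proof. exact: hsb.1. Qed.
Lemma bfZl (a : R) x y : bf (a *: x) y = a * bf x y. Proof. exact: hsb.2.1. Qed.
Lemma bfC x y : bf x y = bf y x. Proof. exact: hsb.2.2. Qed.
Lemma bfDr x y z : bf z (x + y) = bf z x + bf z y.
Proof. by rewrite bfC bfDl bfC (bfC y). Qed.
Lemma bfZr (a : R) x y : bf y (a *: x) = a * bf y x.
Proof. by rewrite bfC bfZl bfC. Qed.
Lemma bfNl x y : bf (- x) y = - bf x y.
Proof. by rewrite -scaleN1r bfZl mulN1r. Qed.
Lemma bfNr x y : bf y (- x) = - bf y x.
Proof. by rewrite bfC bfNl bfC. Qed.
Lemma bfBl x y z : bf (x - y) z = bf x z - bf y z.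
Proof. by rewrite bfDl bfNl. Qed.
Lemma bfBr x y z : bf z (x - y) = bf z x - bf z y.
Proof. by rewrite bfDr bfNr. Qed.

Definition bfE := (bfDl, bfDr, bfZl, bfZr, bfNl, bfNr).

Lemma qformE x : qform bf x = bf x x / 2. Proof. by []. Qed.

Lemma q_comb (t : R) e y : qform bf (t *: e + (1 - t) *: y) =
  t ^+ 2 * qform bf e + t * (1 - t) * bf e y + (1 - t) ^+ 2 * qform bf y.
Proof. by rewrite !qformE !bfE (bfC y e); field. Qed.

Lemma vec_comb (e y1 y2 : B) (l t1 t2 a b T : R) : T = l * t1 + (1 - l) * t2 ->
  a = l * (1 - t1) -> b = (1 - l) * (1 - t2) ->
  l *: (t1 *: e + (1 - t1) *: y1) + (1 - l) *: (t2 *: e + (1 - t2) *: y2) =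
  T *: e + (a *: y1 + b *: y2).
Proof.
move=> -> -> ->; rewrite !scalerDr !scalerA scalerDl; exact: addrACA.
Qed.

Variable f : B -> \bar R.
Hypothesis hmin : minimal_convex_majorant_q bf f.

Definition fD y := f y != +oo%E.
Definition F y := fine (f y).

Lemma fE y : fD y -> f y = (F y)%:E.
Proof.
move=> Dy; rewrite /F fineK // fin_numE; apply/andP; split => //.
exact: hmin.1.1.1.
Qed.

Lemma q_le_F y : fD y -> qform bf y <= F y.
Proof. by move=> Dy; have := hmin.1.2 y; rewrite (fE Dy) lee_fin. Qed.

Lemma f_conv_real x y (l : R) : fD x -> fD y -> 0 <= l <= 1 ->
  fD (l *: x + (1 - l) *: y) /\ F (l *: x + (1 - l) *: y) <= l * F x + (1 - l) * F y.
Proof.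
move=> Dx Dy hl; have := hmin.1.1.2 x y l hl.
rewrite (fE Dx) (fE Dy) -!EFinM -EFinD => H.
have Dc : fD (l *: x + (1 - l) *: y).
  apply/negP => /eqP Hc; move: H; rewrite Hc leye_eq => /eqP.
  by [].
by split => //; move: H; rewrite (fE Dc) lee_fin.
Qed.

End Bil.

Lemma eqle (R : realType) (x y : R) : x = y -> x <= y. Proof. by move=> ->. Qed.

Section Touch.
Variables (R : realType) (B : completeNormedModType R) (bf : B -> B -> R).
Hypothesis hsb : sym_bilinear bf.
Variable f : B -> \bar R.
Hypothesis hmin : minimal_convex_majorant_q bf f.
Variable e : B.
Hypothesis hle : forall c, ((bf c e - qform bf e)%:E <= f c)%E.

Local Notation qe := (qform bf e).
Local Notation fD := (fD f).
Local Notation F := (F f).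

Definition G x : set R := [set v | exists t y, (0 <= t <= 1) /\ x = t *: e + (1 - t) *: y /\
  ((t = 1 /\ v = qe) \/ (t < 1 /\ fD y /\ v = t * qe + (1 - t) * F y))].

Lemma G_lb x v : G x v -> qform bf x <= v.
Proof.
move=> [t [y [/andP[t0 t1] [-> [[-> ->]|[tl [Dy ->]]]]]]].
  by rewrite subrr scale0r addr0 scale1r.
rewrite q_comb //.
have h1 := q_le_F hmin Dy.
have h2 : bf y e - qe <= F y.
  by have := hle y; rewrite (fE hmin Dy) lee_fin.
rewrite (bfC hsb e y).
have a1 : 0 <= 1 - t by lra.
have a2 : 0 <= F y - bf y e + qe by lra.
have a3 : 0 <= F y - qform bf y by lra.
have k1 := mulr_ge0 (mulr_ge0 a1 a1) a3.
have k2 := mulr_ge0 (mulr_ge0 a1 t0) a2.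
rewrite !expr2; lra.
Qed.

Lemma G_comb x1 x2 (l : R) v1 v2 : 0 < l < 1 -> G x1 v1 -> G x2 v2 ->
  exists2 v, G (l *: x1 + (1 - l) *: x2) v & v <= l * v1 + (1 - l) * v2.
Proof.
move=> /andP[l0 l1] [t1 [y1 [/andP[t10 t11] [-> h1]]]] [t2 [y2 [/andP[t20 t21] [-> h2]]]].
set T := l * t1 + (1 - l) * t2.
have EV := @vec_comb _ _ e y1 y2 l t1 t2 (l * (1 - t1)) ((1 - l) * (1 - t2)) T erefl erefl erefl.
rewrite EV.
case: h1 => [[t1e ->]|[t1l [D1 ->]]]; case: h2 => [[t2e ->]|[t2l [D2 ->]]].
-
  exists qe; last by lra.
  exists 1, e; split; first by rewrite ler01 lexx.
  split; last by left.
  rewrite /T t1e t2e !subrr !mulr0 !scale0r !addr0; congr (_ *: _).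
  ring.
-
  exists (T * qe + (1 - T) * F y2).
    exists T, y2; split.
      rewrite /T t1e; apply/andP; split; first by rewrite addr_ge0 // ?mulr_ge0 //; lra.
      nra.
    split.
      rewrite t1e subrr mulr0 scale0r add0r; congr (_ + _); congr (_ *: _).
      by rewrite /T t1e; ring.
    right; split; last by [].
    rewrite /T t1e; nra.
  rewrite /T t1e; apply: eqle; ring.
-
  exists (T * qe + (1 - T) * F y1).
    exists T, y1; split.
      rewrite /T t2e; apply/andP; split; first by rewrite addr_ge0 // ?mulr_ge0 //; lra.
      nra.
    split.
      rewrite t2e subrr mulr0 scale0r addr0; congr (_ + _); congr (_ *: _).
      by rewrite /T t2e; ring.
    right; split; last by [].
    rewrite /T t2e; nra.
  rewrite /T t2e; apply: eqle; ring.
-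
  have T1 : 0 < 1 - T by rewrite /T; nra.
  set mu := l * (1 - t1) / (1 - T).
  have mu01 : 0 <= mu <= 1.
    apply/andP; split; first by rewrite /mu divr_ge0 ?mulr_ge0 // ?ltW //; lra.
    rewrite /mu ler_pdivrMr // mul1r /T; nra.
  have [Dy Fy] := f_conv_real hmin D1 D2 mu01.
  have e1 : (1 - T) * mu = l * (1 - t1) by rewrite /mu; field; rewrite gt_eqF.
  have e2 : (1 - T) * (1 - mu) = (1 - l) * (1 - t2).
    by rewrite mulrBr mulr1 e1 /T; ring.
  exists (T * qe + (1 - T) * F (mu *: y1 + (1 - mu) *: y2)).
    exists T, (mu *: y1 + (1 - mu) *: y2); split.
      rewrite /T; apply/andP; split; first by rewrite addr_ge0 // ?mulr_ge0 //; lra.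
      nra.
    split.
      by rewrite scalerDr !scalerA e1 e2.
    by right; split; [lra | split].
  have : (1 - T) * F (mu *: y1 + (1 - mu) *: y2) <= (1 - T) * (mu * F y1 + (1 - mu) * F y2).
    by rewrite ler_pM2l.
  rewrite mulrDr (mulrA (1 - T) mu) (mulrA (1 - T) (1 - mu)) e1 e2 => H.
  have ET : T * qe = l * t1 * qe + (1 - l) * t2 * qe by rewrite /T; ring.
  lra.
Qed.

Definition gg x : \bar R := if pselect (exists v, G x v) then (inf (G x))%:E else +oo%E.

Lemma gg_fin x : G x !=set0 -> gg x = (inf (G x))%:E.
Proof. by move=> h; rewrite /gg; case: pselect. Qed.

Lemma gg_inf x : ~ (G x !=set0) -> gg x = +oo%E.
Proof. by move=> h; rewrite /gg; case: pselect. Qed.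

Lemma gg_ge_q x : ((qform bf x)%:E <= gg x)%E.
Proof.
case: (pselect (exists v, G x v)) => h; last by rewrite gg_inf // leey.
rewrite gg_fin // lee_fin; apply: le_inf_all => // v Gv; exact: G_lb.
Qed.

Lemma gg_le_inf x v : G x v -> (gg x <= v%:E)%E.
Proof.
move=> Gv; rewrite gg_fin; last by exists v.
rewrite lee_fin; apply: inf_le_elt Gv => y; exact: G_lb.
Qed.

Lemma gg_le_f x : (gg x <= f x)%E.
Proof.
case: (boolP (fD x)) => Dx; last by move: Dx; rewrite /fD negbK => /eqP ->; exact: leey.
rewrite (fE hmin Dx); apply: gg_le_inf.
exists 0, x; split; first by rewrite lexx ler01.
split; first by rewrite scale0r add0r subr0 scale1r.
by right; split => //; split => //; rewrite mul0r add0r subr0 mul1r.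
Qed.

Lemma gg_mul_ninf x (c : R) : 0 <= c -> (c%:E * gg x != -oo)%E.
Proof.
move=> c0; case: (pselect (exists v, G x v)) => h.
  by rewrite gg_fin // -EFinM.
rewrite gg_inf //; have [->|cp] := eqVneq c 0; first by rewrite mul0e.
by rewrite gt0_muley // lte_fin lt_def cp c0.
Qed.

Lemma gg_conv : proper_convex gg.
Proof.
split.
  move=> x; case: (pselect (exists v, G x v)) => h; first by rewrite gg_fin.
  by rewrite gg_inf.
move=> x1 x2 l /andP[l0 l1].
have [->|ln0] := eqVneq l 0.
  by rewrite scale0r add0r subr0 scale1r mul0e add0e mul1e.
have [->|ln1] := eqVneq l 1.
  by rewrite scale1r subrr scale0r addr0 mul1e mul0e adde0.
have lp : 0 < l by rewrite lt_def ln0 l0.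
have lq : l < 1 by rewrite lt_neqAle ln1 l1.
have lm : 0 < 1 - l by rewrite subr_gt0.
case: (pselect (exists v, G x1 v)) => h1; last first.
  rewrite (gg_inf h1) gt0_muley ?lte_fin // addye; first exact: leey.
  by apply: gg_mul_ninf; rewrite ltW.
case: (pselect (exists v, G x2 v)) => h2; last first.
  rewrite (gg_inf h2) (gt0_muley (x := (1 - l)%:E)) ?lte_fin // addey; first exact: leey.
  exact: gg_mul_ninf.
have hc : forall v1 v2, G x1 v1 -> G x2 v2 ->
    inf (G (l *: x1 + (1 - l) *: x2)) <= l * v1 + (1 - l) * v2.
  move=> v1 v2 G1 G2; have [v Gv vle] := G_comb (introT andP (conj lp lq)) G1 G2.
  apply: le_trans vle; apply: inf_le_elt Gv => y; exact: G_lb.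
have [w1 G1] := h1; have [w2 G2] := h2.
rewrite (gg_fin h1) (gg_fin h2) gg_fin; last first.
  by have [v Gv _] := G_comb (introT andP (conj lp lq)) G1 G2; exists v.
rewrite -!EFinM -EFinD lee_fin.
have H2 : forall v2, G x2 v2 ->
    inf (G (l *: x1 + (1 - l) *: x2)) <= l * inf (G x1) + (1 - l) * v2.
  move=> v2 Gv2; apply: le_inf_aff; [exact: ltW | exact: h1 | by move=> y; exact: G_lb | ].
  by move=> v1 Gv1; exact: hc.
have : inf (G (l *: x1 + (1 - l) *: x2)) <= (1 - l) * inf (G x2) + l * inf (G x1).
  apply: le_inf_aff; [exact: ltW | exact: h2 | by move=> y; exact: G_lb | ].
  by move=> v2 Gv2; have := H2 v2 Gv2; lra.
lra.
Qed.

Lemma touch : f e = (qe)%:E.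
Proof.
have gmaj : convex_majorant_q bf gg by split; [exact: gg_conv | exact: gg_ge_q].
have gf := hmin.2 gg gmaj gg_le_f.
apply/le_anti/andP; split; last exact: hmin.1.2.
rewrite -gf; apply: gg_le_inf.
exists 1, e; split; first by rewrite lexx ler01.
split; first by rewrite subrr scale0r addr0 scale1r.
by left.
Qed.
End Touch.

Lemma le_eps1 (R : realType) (A Bv c : R) : 0 <= c ->
  (forall e, 0 < e -> e <= 1 -> A - e * c <= Bv) -> A <= Bv.
Proof.
move=> c0 h; rewrite leNgt; apply/negP => H.
have d0 : 0 < A - Bv + c + 1 by lra.
set e := (A - Bv) / (A - Bv + c + 1).
have e0 : 0 < e by rewrite /e divr_gt0 // subr_gt0.
have ee : e * (A - Bv + c + 1) = A - Bv by rewrite /e divfK // gt_eqF.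
have e1 : e <= 1 by rewrite /e ler_pdivrMr //; lra.
have := h e e0 e1; nra.
Qed.

Section Main.
Variables (R : realType) (B : completeNormedModType R) (bf : B -> B -> R).
Hypothesis hsb : sym_bilinear bf.
Hypothesis hlin : forall b : B, cont_linear_functional (fun x => bf x b).
Hypothesis hdn : forall b : B, dual_norm_eq bf b.
Hypothesis hsurj : forall phi : B -> R, cont_linear_functional phi ->
     exists b : B, forall x : B, phi x = bf x b.
Variable f : B -> \bar R.
Hypothesis hmin : minimal_convex_majorant_q bf f.

Local Notation q := (qform bf).
Local Notation fD := (fD f).
Local Notation F := (F f).

Lemma q_sub b a : q (b - a) = q b - bf b a + q a.
Proof. by rewrite !qformE !(bfE hsb) (bfC hsb a b); field. Qed.

Lemma q_add b a : q (b + a) = q b + bf b a + q a.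
Proof. by rewrite !qformE !(bfE hsb) (bfC hsb a b); field. Qed.

Lemma bf_self_lb z : - (`|z| ^+ 2) <= bf z z.
Proof.
have [h _] := hdn z; have := h z; rewrite ler_norml => /andP[h1 _].
by rewrite expr2.
Qed.

Lemma core b0 : exists a, f a = (q a)%:E /\ q (b0 - a) <= 0.
Proof.
pose D z := fD (z + b0).
pose K z := F (z + b0) - bf z b0 - q b0.
have Kconv : forall x y (l : R), D x -> D y -> 0 <= l <= 1 ->
    D (l *: x + (1 - l) *: y) /\ K (l *: x + (1 - l) *: y) <= l * K x + (1 - l) * K y.
  move=> x y l Dx Dy hl.
  have [Dc Fc] := f_conv_real hmin Dx Dy hl.
  have E : l *: (x + b0) + (1 - l) *: (y + b0) = (l *: x + (1 - l) *: y) + b0.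
    by rewrite !scalerDr addrACA -scalerDl subrKC scale1r.
  rewrite E in Dc Fc; split => //.
  rewrite /K (bfDl hsb) !(bfZl hsb); lra.
have Klb : forall z, D z -> 0 <= K z + `|z| ^+ 2 / 2.
  move=> z Dz; have := q_le_F hmin Dz; rewrite q_add /K.
  have := bf_self_lb z; rewrite qformE; lra.
have [d hd] := conv_bound Kconv Klb hsurj hdn hlin.
set e := d + b0.
have hle : forall c, ((bf c e - q e)%:E <= f c)%E.
  move=> c; case: (boolP (fD c)) => Dc; last first.
    by move: Dc; rewrite /fD negbK => /eqP ->; exact: leey.
  have Dc' : D (c - b0) by rewrite /D subrK.
  have := hd _ Dc'; rewrite /K subrK (fE hmin Dc) lee_fin /e.
  rewrite q_add !(bfE hsb) (bfC hsb b0 d).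
  have := bf_self_lb d; rewrite !qformE; lra.
have fe := touch hsb hmin hle.
exists e; split => //.
have De : D d by rewrite /D /fD -/e fe.
have := hd _ De; rewrite /K -/e /F fe /= /e q_add.
have -> : b0 - (d + b0) = - d by rewrite opprD addrCA subrr addr0.
have -> : q (- d) = q d by rewrite qformE (bfNl hsb) (bfNr hsb) opprK.
have := normr_ge0 d; rewrite !qformE; nra.
Qed.

Lemma below_M a b : f a = (q a)%:E -> ((bf b a - q a)%:E <= f b)%E.
Proof.
move=> fa; case: (boolP (fD b)) => Db; last first.
  by move: Db; rewrite /fD negbK => /eqP ->; exact: leey.
have Da : fD a by rewrite /fD fa.
rewrite (fE hmin Db) lee_fin.
have Fa : F a = q a by rewrite /F fa.
set X := bf b a - q a.
apply: (@le_eps1 _ X (F b) `|X - q b|) => // s s0 s1.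
have hl : 0 <= 1 - s <= 1 by apply/andP; split; lra.
have [Dc Fc] := f_conv_real hmin Da Db hl.
have qc := q_le_F hmin Dc.
rewrite q_comb // Fa (bfC hsb a b) in qc Fc.
have ss : 1 - (1 - s) = s by ring.
rewrite ss in qc Fc.
have hX : X - q b <= `|X - q b| by apply: ler_norm.
have : s * (X - s * `|X - q b|) <= s * F b.
  have h3 : s * (s * (X - q b)) <= s * (s * `|X - q b|).
    by rewrite ler_pM2l // ler_pM2l.
  have h4 : (1 - s) ^+ 2 * q a + (1 - s) * s * bf b a + s ^+ 2 * q b <= (1 - s) * q a + s * F b.
    exact: le_trans qc Fc.
  have hXe : X = bf b a - q a by [].
  move: h3 h4; clearbody X; rewrite !expr2 hXe; lra.
by rewrite ler_pM2l.
Qed.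

Lemma main_result : exists M : set B, max_q_positive bf M /\ f = Phi bf M.
Proof.
pose M := [set a | f a = (q a)%:E].
have Mne : M !=set0 by have [a [fa _]] := core 0; exists a.
have fge : forall b, (Phi bf M b <= f b)%E.
  by move=> b; apply: ge_ereal_sup => _ [a Ma <-]; exact: below_M.
have Pq : forall b, ((q b)%:E <= Phi bf M b)%E.
  move=> b; have [a [fa qa]] := core b.
  apply: (@le_trans _ _ (bf b a - q a)%:E); last by apply: ereal_sup_ubound; exists a.
  by rewrite lee_fin; move: qa; rewrite q_sub; lra.
have Pconv : proper_convex (Phi bf M).
  split.
    move=> x; apply/negP => /eqP h; have := Pq x; rewrite h.
    by rewrite leeNy_eq.
  move=> x y l /andP[l0 l1]; apply: ge_ereal_sup => _ [a Ma <-].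
  have -> : bf (l *: x + (1 - l) *: y) a - q a =
      l * (bf x a - q a) + (1 - l) * (bf y a - q a).
    by rewrite (bfDl hsb) !(bfZl hsb); ring.
  rewrite EFinD !EFinM; apply: leeD; apply: lee_wpmul2l; rewrite ?lee_fin ?subr_ge0 //.
  - by apply: ereal_sup_ubound; exists a.
  - by apply: ereal_sup_ubound; exists a.
have Pf := hmin.2 (Phi bf M) (conj Pconv Pq) fge.
have Mle : forall b c, M b -> M c -> 0 <= q (b - c).
  move=> b c Mb Mc; have := @below_M c b Mc; rewrite Mb lee_fin q_sub; lra.
exists M; split; last by rewrite Pf.
split; first by split.
move=> A' [A'ne A'pos] MA'.
apply/seteqP; split => //.
move=> c A'c; rewrite /M /=.
apply/le_anti/andP; split; last exact: hmin.1.2.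
rewrite -Pf; apply: ge_ereal_sup => _ [a Ma <-].
rewrite lee_fin; have := A'pos c a A'c (MA' a Ma); rewrite q_sub; lra.
Qed.
End Main.

Unset Implicit Arguments.

Theorem mainTheorem16 (R : realType) (B : completeNormedModType R)
  (bf : B -> B -> R) (f : B -> \bar R) :
  is_SSDB bf -> minimal_convex_majorant_q bf f ->
  exists M : set B, max_q_positive bf M /\ f = Phi bf M.
Proof.
move=> [_ [hsb [hlin [hdn hsurj]]]] hmin.
exact: (main_result hsb hlin hdn hsurj hmin).
Qed.
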